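(* For every $n\geq0$ and every finite field $\mathbb{F}_q$, $\sum_{\alpha\in\mathbb{F}_q^*}N_{\mathbb{A}_n}(\alpha)=\frac{q^{n+2}+(-1)^{n+1}}{q+1}$, and this is the number of $\mathbb{F}_q$-points of $Y_{\mathbb{A}_n}$.
   Context: For $\alpha$ invertible and $n\ge1$, $X_n(\alpha)$ is the affine variety in variables $x_1,\dots,x_n,x'_1,\dots,x'_n$ defined by $x_1x'_1=1+\alpha x_2$, $x_ix'_i=1+x_{i-1}x_{i+1}$ for $2\le i\le n-1$, $x_nx'_n=1+x_{n-1}$ (for $n=1$: $x_1x'_1=1+\alpha$); $X_0(\alpha)$ is a point. $N_{\mathbb{A}_n}(\alpha)$ is the number of $\mathbb{F}_q$-points of $X_n(\alpha)$. $Y_{\mathbb{A}_n}$ is the variety in variables $(\alpha,x_1,\dots,x_n,x'_1,\dots,x'_n)$ with $\alpha\neq0$ defined by the same equations (the union of all $X_n(\alpha)$, $\alpha$ invertible); by convention $Y_{\mathbb{A}_0}=\mathbb{A}^1\setminus\{0\}$. *)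

(* Defs.v *)
From HB Require Import structures.
From mathcomp Require Import all_boot all_order all_algebra all_field.
Set Implicit Arguments. Unset Strict Implicit. Unset Printing Implicit Defensive.
Import Order.TTheory GRing.Theory Num.Theory.
Local Open Scope ring_scope.

(* Variables x_1..x_n are indexed by i : 'I_n (0-based: x i = x_{i+1}).
   ext_seq alpha x = [:: alpha; x_1; ...; x_n; 1].
   The defining equation number i (0-based) is
     x_{i+1} x'_{i+1} = 1 + (ext_seq)_i * (ext_seq)_{i+2},
   which gives x_1x'_1 = 1 + alpha x_2, x_ix'_i = 1 + x_{i-1}x_{i+1},
   x_nx'_n = 1 + x_{n-1}, and x_1x'_1 = 1 + alpha when n = 1. *)
Definition ext_seq (F : nzRingType) (n : nat) (alpha : F) (x : {ffun 'I_n -> F})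
  : seq F := alpha :: rcons [seq x i | i : 'I_n] 1.

Definition XA_eqs (F : nzRingType) (n : nat) (alpha : F)
  (x x' : {ffun 'I_n -> F}) : bool :=
  [forall i : 'I_n,
     x i * x' i == 1 + (ext_seq alpha x)`_i * (ext_seq alpha x)`_(i.+2)].

Definition N_A (F : finFieldType) (n : nat) (alpha : F) : nat :=
  #|[set p : {ffun 'I_n -> F} * {ffun 'I_n -> F} | XA_eqs alpha p.1 p.2]|.

Definition Y_A_card (F : finFieldType) (n : nat) : nat :=
  #|[set t : F * ({ffun 'I_n -> F} * {ffun 'I_n -> F}) |
      (t.1 != 0) && XA_eqs t.1 t.2.1 t.2.2]|.

(* Main.v *)
Require Import Defs.
From HB Require Import structures.
From mathcomp Require Import all_boot all_order all_algebra all_field.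
From mathcomp Require Import ring.
Set Implicit Arguments. Unset Strict Implicit. Unset Printing Implicit Defensive.
Import Order.TTheory GRing.Theory Num.Theory.
Local Open Scope ring_scope.

Section S.
Variable F : finFieldType.

Fixpoint SL (n : nat) (G : seq F -> nat) : nat :=
  match n with 0 => G [::] | n'.+1 => (\sum_(y : F) SL n' (fun s => G (y :: s)))%N end.

Lemma SL_ext n G H : (forall s, G s = H s) -> SL n G = SL n H.
Proof.
elim: n G H => [|n IH] G H e //=; apply: eq_bigr => y _; exact: IH.
Qed.

Lemma seq_imE n (x : {ffun 'I_n -> F}) : [seq x i | i : 'I_n] = map x (enum 'I_n).
Proof. by []. Qed.

Lemma sum_ffun_SL n (G : seq F -> nat) :
  (\sum_(x : {ffun 'I_n -> F}) G [seq x i | i : 'I_n])%N = SL n G.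
Proof.
elim: n G => [|n IH] G /=.
  have E (x : {ffun 'I_0 -> F}) : [seq x i | i : 'I_0] = [::].
    by apply/nilP; rewrite /nilp size_image card_ord.
  rewrite (eq_bigr (fun _ => G [::])); last by move=> x _; rewrite E.
  by rewrite sum_nat_const card_ffun card_ord expn0 mul1n.
rewrite (eq_bigr (fun y => \sum_(x : {ffun 'I_n -> F}) G (y :: [seq x i | i : 'I_n]))%N); last by move=> y _; rewrite (IH (fun s => G (y :: s))).
rewrite pair_big /=.
pose h (p : F * {ffun 'I_n -> F}) : {ffun 'I_n.+1 -> F} :=
  [ffun i => if unlift ord0 i is Some j then p.2 j else p.1].
pose g (x : {ffun 'I_n.+1 -> F}) := (x ord0, [ffun j => x (lift ord0 j)]).
rewrite (reindex h) /=; last first.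
  exists g => [[a b] _|x _].
    rewrite /g /h !ffunE unlift_none; congr pair; apply/ffunP => j.
    by rewrite !ffunE liftK.
  apply/ffunP => i; rewrite /h /g ffunE.
  by case: unliftP => [j ->|->]; rewrite ?ffunE.
apply: eq_bigr => [[a b]] _.
rewrite !seq_imE enum_ordSl /= -map_comp /h ffunE unlift_none.
congr (G (_ :: _)); apply: eq_map => j /=.
by rewrite ffunE liftK.
Qed.
Definition cc (u x v : F) : nat := #|[pred y : F | x * y == 1 + u * v]|.

Fixpoint W (u : F) (s : seq F) (v : F) : nat :=
  match s with [::] => 1%N | x :: s' => (cc u x (head v s') * W x s' v)%N end.

Definition M n u v := SL n (fun s => W u s v).

Lemma cc_nz u x v : x != 0 -> cc u x v = 1%N.
Proof.
move=> xnz; rewrite /cc -(card1 (x^-1 * (1 + u * v))); apply: eq_card => y /=.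
rewrite inE; apply/eqP/eqP => [<-|->]; first by rewrite mulrA mulVf ?mul1r.
by rewrite mulrA mulfV ?mul1r.
Qed.

Lemma cc_0 u v : cc u 0 v = if 1 + u * v == 0 then #|F| else 0%N.
Proof.
rewrite /cc; case: ifP => /eqP e.
  by apply: eq_card => y; rewrite !inE /= mul0r e eqxx.
by apply: eq_card0 => y; rewrite !inE /= mul0r eq_sym; apply/eqP.
Qed.

Lemma SL_scale n k G : SL n (fun s => k * G s)%N = (k * SL n G)%N.
Proof.
elim: n k G => [|n IH] k G //=; rewrite big_distrr /=; apply: eq_bigr => y _.
exact: IH.
Qed.

Lemma M_rec n u v : u != 0 ->
  M n.+2 u v = (\sum_(y | (y != 0)%R) M n.+1 y v + #|F| * M n (- u^-1) v)%N.
Proof.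
move=> unz; rewrite /M /= (bigD1 (0:F)) //= addnC; congr addn.
  apply: eq_bigr => y ynz; apply: eq_bigr => z _; apply: SL_ext => t /=.
  by rewrite cc_nz // mul1n.
rewrite (bigD1 (- u^-1)) //= big1 ?addn0.
  rewrite -SL_scale; apply: SL_ext => t /=.
  rewrite cc_0 mulrN mulfV // subrr eqxx cc_nz ?mul1n //.
  by rewrite oppr_eq0 invr_eq0.
move=> z zne; rewrite (SL_ext _ (H := fun t => 0 * 0)%N) ?SL_scale ?mul0n //.
move=> t /=; rewrite cc_0; case: ifP => // /eqP e; exfalso; move/eqP: zne; apply.
apply: (mulfI unz); rewrite mulrN mulfV //; apply/eqP.
by rewrite -subr_eq0 opprK addrC e.
Qed.

Lemma M1 u v : M 1 u v = (#|F|.-1 + if (1 + u * v == 0)%R then #|F| else 0)%N.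
Proof.
rewrite /M /= (bigD1 (0:F)) //= addnC muln1 cc_0; congr addn.
rewrite (eq_bigr (fun _ => 1%N)); last by move=> y ynz; rewrite muln1 cc_nz.
by rewrite sum_nat_const muln1 cardC1.
Qed.
Definition Y n := (\sum_(u : F | (u != 0)%R) M n u 1%R)%N.

Lemma nz_card : #|[pred u : F | u != 0]| = #|F|.-1.
Proof. by rewrite -(cardC1 (0:F)); apply: eq_card => u; rewrite !inE. Qed.

Lemma Y0 : Y 0 = #|F|.-1.
Proof. by rewrite /Y /M /= sum_nat_const muln1 nz_card. Qed.

Lemma Y1 : Y 1 = (#|F|.-1 * #|F|.-1 + #|F|)%N.
Proof.
rewrite /Y (eq_bigr (fun u => #|F|.-1 + if (u == -1)%R then #|F| else 0)%N); last first.
  move=> u _; rewrite M1 mulr1; congr addn; congr (if _ then _ else _).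
  by rewrite addrC addr_eq0.
rewrite big_split /= sum_nat_const nz_card; congr addn.
rewrite (bigD1 (-1 : F)) ?oppr_eq0 ?oner_eq0 //= eqxx big1 ?addn0 //.
by move=> u /andP[_ /negbTE ->].
Qed.

Lemma Yrec n : Y n.+2 = (#|F|.-1 * Y n.+1 + #|F| * Y n)%N.
Proof.
rewrite /Y (eq_bigr _ (fun u unz => @M_rec n u 1 unz)) big_split /=.
rewrite sum_nat_const nz_card -big_distrr /=; congr (_ + _ * _)%N.
have hinj : injective (fun u : F => - u^-1).
  by move=> a b /= /eqP; rewrite eqr_opp => /eqP /invr_inj.
rewrite (reindex_inj hinj) /=; apply: eq_big => [u|u _]; first by rewrite oppr_eq0 invr_eq0.
by rewrite invrN invrK opprK.
Qed.

Lemma Yclosed n : ((Y n)%:R * (#|F|%:R + 1) : rat)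
   = (#|F|%:R) ^+ (n + 2) + (-1) ^+ (n + 1).
Proof.
have [k Hk] : exists k, #|F| = k.+1.
  by exists #|F|.-1; rewrite prednK //; apply/card_gt0P; exists 0.
suff : (forall m, (m <= n)%N -> ((Y m)%:R * (#|F|%:R + 1) : rat)
   = (#|F|%:R) ^+ (m + 2) + (-1) ^+ (m + 1)) by apply.
elim: n => [|n IH] m.
  rewrite leqn0 => /eqP ->; rewrite Y0 Hk /=. rewrite -[k.+1]addn1 natrD; ring.
rewrite leq_eqVlt => /orP[/eqP ->|]; last exact: IH.
case: n IH => [|n] IH.
  rewrite Y1 Hk /= natrD natrM -[k.+1]addn1 natrD; ring.
rewrite Yrec natrD !natrM mulrDl -!mulrA IH // IH // Hk /= -[k.+1]addn1 natrD.
rewrite !addnS !addn0 !exprS; ring.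
Qed.
Lemma W_prod u s v : W u s v =
  (\prod_(0 <= i < size s) cc ((u :: rcons s v)`_i)%R ((u :: rcons s v)`_i.+1)%R
                              ((u :: rcons s v)`_i.+2)%R)%N.
Proof.
elim: s u => [|x s IH] u /=; first by rewrite big_geq.
rewrite big_nat_recl //= IH; congr muln.
by case: s {IH}.
Qed.

Lemma foldr_prod (T : eqType) (f : T -> nat) (s : seq T) :
  foldr muln 1%N (map f s) = (\prod_(i <- s) f i)%N.
Proof. by elim: s => [|x s IH] /=; rewrite ?big_nil ?big_cons ?IH. Qed.

Lemma card_pair (T1 T2 : finType) (P : T1 -> T2 -> bool) :
  #|[set p : T1 * T2 | P p.1 p.2]| = (\sum_x #|[set y | P x y]|)%N.
Proof.
transitivity (\sum_(p | P p.1 p.2) 1)%N.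
  by rewrite -sum1_card; apply: eq_bigl => p; rewrite inE.
rewrite -(pair_big_dep xpredT (fun x y => P x y) (fun _ _ => 1%N)).
apply: eq_bigr => x _; rewrite -sum1_card; apply: eq_bigl => y; rewrite inE.
by [].
Qed.
End S.

Lemma N_A_M (F : finFieldType) n (a : F) : N_A n a = M n a 1.
Proof.
rewrite /N_A card_pair /M -sum_ffun_SL; apply: eq_bigr => x _.
set s := [seq x i | i : 'I_n].
have ss : size s = n by rewrite size_image card_ord.
have xs (i : 'I_n) : x i = (a :: rcons s 1)`_i.+1.
  by rewrite /= nth_rcons ss ltn_ord /s seq_imE (nth_map i) ?size_enum_ord // nth_ord_enum.
rewrite W_prod ss big_mkord.
rewrite (eq_card (B := family (fun i : 'I_n =>
      [pred y : F | x i * y == 1 + (a :: rcons s 1)`_i * (a :: rcons s 1)`_i.+2]))).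
  rewrite card_family foldr_prod big_enum /=; apply: eq_big => // i _.
  by rewrite /cc xs.
move=> y; rewrite inE /XA_eqs; apply/forallP/familyP => H i; move: (H i) => //.
Qed.

Theorem mainTheorem7 (F : finFieldType) (n : nat) :
  ((\sum_(a : F | a != 0) N_A n a)%:R : rat)
    = ((#|F|%:R) ^+ (n + 2) + (-1) ^+ (n + 1)) / (#|F|%:R + 1)
  /\ (Y_A_card F n = \sum_(a : F | (a != 0)%R) N_A n a)%N.
Proof.
split.
  have -> : (\sum_(a : F | (a != 0)%R) N_A n a)%N = Y F n.
    by apply: eq_bigr => a _; rewrite N_A_M.
  rewrite -Yclosed mulfK //.
  by rewrite natr1 pnatr_eq0.
rewrite /Y_A_card.
rewrite (card_pair (fun (a : F) (p : {ffun 'I_n -> F} * {ffun 'I_n -> F}) =>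
   (a != 0) && XA_eqs a p.1 p.2)).
rewrite (bigID (fun a : F => a != 0)) /= [X in (_ + X)%N]big1 ?addn0.
  apply: eq_bigr => a anz; rewrite /N_A; apply: eq_card => p; rewrite !inE anz.
  by [].
move=> a /negbNE anz; apply: eq_card0 => p; rewrite !inE anz.
by [].
Qed.
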